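(* Let $D>0$ be a square-free integer with $-D\equiv 2$ or $3\pmod 4$, and suppose $C(-4D)\cong(\mathbb{Z}/2\mathbb{Z})^n$ for some $n\ge 0$. Let $c=p_1^{n_1}\cdots p_k^{n_k}$ be an odd positive integer, with $p_i$ distinct primes. Then there exists a normalized solution $(a,b,c)$ to $x^2+Dy^2=z^2$ if and only if $\left(\frac{-D}{p_i}\right)=1$ for all $1\le i\le k$.
   Context: A normalized solution of $x^2+Dy^2=z^2$ is a triple $(a,b,c)$ of natural numbers with $a^2+Db^2=c^2$ and $\gcd(a,b,c)=1$. $C(-4D)$ denotes the set of $\mathrm{SL}_2(\mathbb{Z})$-equivalence classes of primitive positive-definite binary quadratic forms of discriminant $-4D$, a group under Dirichlet composition. $\left(\frac{\cdot}{p}\right)$ is the Legendre symbol. *)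

(* Defs.v *)
From mathcomp Require Import all_boot all_order all_algebra.
Set Implicit Arguments. Unset Strict Implicit. Unset Printing Implicit Defensive.
Import Order.TTheory GRing.Theory Num.Theory.
Local Open Scope ring_scope.

(* A binary quadratic form a x^2 + b x y + c y^2, coded as (a, b, c). *)
Definition bqf := (int * int * int)%type.
Definition fa (f : bqf) : int := f.1.1.
Definition fb (f : bqf) : int := f.1.2.
Definition fc (f : bqf) : int := f.2.

Definition disc (f : bqf) : int := fb f ^+ 2 - 4 * fa f * fc f.

Definition primitive_form (f : bqf) : bool :=
  gcdz (gcdz (fa f) (fb f)) (fc f) == 1.

Definition posdef (f : bqf) : bool := (0 < fa f) && (disc f < 0).

(* the forms whose classes make up C(Delta) *)
Definition form_of_disc (Delta : int) (f : bqf) : bool :=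
  [&& primitive_form f, posdef f & disc f == Delta].

(* proper (SL_2(Z)) equivalence: g(x,y) = f(p x + q y, r x + s y), ps - qr = 1 *)
Definition sl2_equiv (f g : bqf) : Prop :=
  exists p q r s : int, p * s - q * r = 1 /\
    fa g = fa f * p ^+ 2 + fb f * p * r + fc f * r ^+ 2 /\
    fb g = 2 * fa f * p * q + fb f * (p * s + q * r) + 2 * fc f * r * s /\
    fc g = fa f * q ^+ 2 + fb f * q * s + fc f * s ^+ 2.

(* Dirichlet composition, as a relation on forms: h represents the
   composite class [f][g] when f ~ (a, B, a'C), g ~ (a', B, aC) and
   h ~ (aa', B, C) with a, a' > 0 (gcd(a,a',B) = 1 is automatic from the
   primitivity of f and g). *)
Definition dirichlet_comp (f g h : bqf) : Prop :=
  exists a a' B C : int, 0 < a /\ 0 < a' /\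
    sl2_equiv f (a, B, a' * C) /\ sl2_equiv g (a', B, a * C) /\
    sl2_equiv h (a * a', B, C).

(* C(Delta) is isomorphic to (Z/2Z)^n: a map phi from forms to F_2^n
   (vectors of booleans, addition = xor) inducing a bijection on
   SL_2(Z)-classes which is a homomorphism for Dirichlet composition. *)
Definition class_group_iso_Z2n (Delta : int) (n : nat) : Prop :=
  exists phi : bqf -> {ffun 'I_n -> bool},
    (forall f g, form_of_disc Delta f -> form_of_disc Delta g ->
       (sl2_equiv f g <-> phi f = phi g)) /\
    (forall v, exists f, form_of_disc Delta f /\ phi f = v) /\
    (forall f g h, form_of_disc Delta f -> form_of_disc Delta g ->
       form_of_disc Delta h -> dirichlet_comp f g h ->
       phi h = [ffun i => xorb (phi f i) (phi g i)]).

Definition squarefree (D : nat) : Prop :=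
  forall p : nat, prime p -> ~~ (p * p %| D)%N.

Definition legendre_eq1 (a : int) (p : nat) : Prop :=
  ~~ (p%:Z %| a)%Z /\ exists x : int, (p%:Z %| x ^+ 2 - a)%Z.

Definition normalized_solution (D a b c : nat) : Prop :=
  (a ^ 2 + D * b ^ 2 = c ^ 2)%N /\ gcdn (gcdn a b) c = 1%N.

(* Main.v *)
Require Import Defs.
Set Warnings "-notation-overridden,-ambiguous-paths".
From mathcomp Require Import all_boot all_order all_algebra.
Set Warnings "-notation-overridden,-ambiguous-paths".
From mathcomp Require Import zify ring.
Import Order.TTheory GRing.Theory Num.Theory.
Local Open Scope ring_scope.

Lemma combine_sol (D M N t s : int) : coprimez M N ->
  (M %| t ^+ 2 + D)%Z -> (N %| s ^+ 2 + D)%Z ->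
  exists t', (M * N %| t' ^+ 2 + D)%Z.
Proof.
move=> /coprimezP [[x y] /= Hxy] /dvdzP [u Hu] /dvdzP [v Hv].
exists (t * y * N + s * x * M).
rewrite Gauss_dvdz; last by apply/coprimezP; exists (x, y).
have e1 : y * N = 1 - x * M by rewrite -Hxy; ring.
have e2 : x * M = 1 - y * N by rewrite -Hxy; ring.
apply/andP; split; apply/dvdzP.
- exists (u + x * (s - t) * (t * y * N + s * x * M + t)).
  have -> : (t * y * N + s * x * M) = t + M * (x * (s - t)).
    by rewrite -mulrA e1; ring.
  transitivity ((t ^+ 2 + D) + M * (x * (s - t)) * (t + M * (x * (s - t)) + t)); first by ring.
  rewrite Hu; ring.
- exists (v + y * (t - s) * (t * y * N + s * x * M + s)).
  have -> : (t * y * N + s * x * M) = s + N * (y * (t - s)).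
    by rewrite -[s * x * M]mulrA e2; ring.
  transitivity ((s ^+ 2 + D) + N * (y * (t - s)) * (s + N * (y * (t - s)) + s)); first by ring.
  rewrite Hv; ring.
Qed.

Lemma coprime_p_t (D t M : int) (p : nat) : prime p -> ~~ (p%:Z %| D)%Z ->
  (p%:Z %| M)%Z -> (M %| t ^+ 2 + D)%Z -> coprimez p%:Z t.
Proof.
move=> pp nPD pM Mt; rewrite coprimezE /= prime_coprime //.
apply/negP => pt; move/negP: nPD; apply.
have h1 : (p%:Z %| t ^+ 2 + D)%Z by apply: dvdz_trans pM Mt.
have h2 : (p%:Z %| t ^+ 2)%Z by apply: dvdz_exp => //; rewrite dvdzE.
have -> : D = (t ^+ 2 + D) - t ^+ 2 by ring.
by rewrite rpredB.
Qed.

Lemma lift_sol (D M t : int) (p : nat) : prime p -> ~~ (p%:Z %| D)%Z -> odd p ->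
  (p%:Z %| M)%Z -> (M %| t ^+ 2 + D)%Z ->
  exists t', (M * p%:Z %| t' ^+ 2 + D)%Z.
Proof.
move=> pp nPD op pM Mt.
have cPt : coprimez p%:Z (2 * t).
  rewrite coprimezMr (coprime_p_t _ _ _ _ pp nPD pM Mt) andbT coprimezE /=.
  by rewrite coprime_sym prime_coprime // dvdn2 op.
move: pM Mt => /dvdzP [m Hm] /dvdzP [u Hu].
move/coprimezP: cPt => [[y x] /= Hxy].
exists (t - u * x * M); apply/dvdzP.
exists (u * y + (u * x) ^+ 2 * m).
transitivity ((t ^+ 2 + D) - u * M * (x * (2 * t)) + (u * x * M) ^+ 2).
  by ring.
transitivity (u * M * (1 - x * (2 * t)) + (u * x * M) ^+ 2).
  by rewrite Hu; ring.
have -> : 1 - x * (2 * t) = y * p%:Z by apply/eqP; rewrite subr_eq Hxy.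
transitivity (u * M * (y * p%:Z) + (u * x) ^+ 2 * M * M); first by ring.
have -> : (u * x) ^+ 2 * M * M = (u * x) ^+ 2 * M * (m * p%:Z) by rewrite -Hm.
ring.
Qed.

Lemma exists_sqrt (D : int) (m : nat) : (0 < m)%N ->
  (forall p, prime p -> (p %| m)%N ->
     [/\ odd p, ~~ (p%:Z %| D)%Z & exists x, (p%:Z %| x ^+ 2 + D)%Z]) ->
  exists t, (m%:Z %| t ^+ 2 + D)%Z.
Proof.
elim/ltn_ind: m => m IH m0 H.
have [->|m1] := eqVneq m 1%N; first by exists 0; rewrite dvd1z.
have m2 : (1 < m)%N by case: m m0 m1 {IH H} => [|[|]].
have pp := pdiv_prime m2; set p := pdiv m in pp *.
have pm : (p %| m)%N := pdiv_dvd m.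
have em : (m %/ p * p = m)%N := divnK pm.
have m'0 : (0 < m %/ p)%N by rewrite divn_gt0 ?prime_gt0 // dvdn_leq.
have m'm : (m %/ p %| m)%N by rewrite -{2}em dvdn_mulr.
have [t Ht] := IH (m %/ p)%N (ltn_Pdiv (prime_gt1 pp) m0) m'0
  (fun q pq qm => H q pq (dvdn_trans qm m'm)).
have [op nPD [x Hx]] := H p pp pm.
have [pm'|npm'] := boolP (p %| m %/ p)%N.
  have pm'z : (p%:Z %| (m %/ p)%:Z)%Z by rewrite dvdzE.
  have [t' Ht'] := lift_sol _ _ _ _ pp nPD op pm'z Ht.
  by exists t'; rewrite -PoszM em in Ht'.
have cp : coprimez (m %/ p)%:Z p%:Z.
  by rewrite coprimezE /= coprime_sym prime_coprime.
have [t' Ht'] := combine_sol _ _ _ _ _ cp Ht Hx.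
by exists t'; rewrite -PoszM em in Ht'.
Qed.

Lemma fwd (D c a b p : nat) : squarefree D -> normalized_solution D a b c ->
  prime p -> (p %| c)%N -> legendre_eq1 (- D%:Z) p.
Proof.
move=> sqD [Heq Hg] pp pc.
have pc2 : (p %| c ^ 2)%N by rewrite Euclid_dvdX // pc.
have pb : ~~ (p %| b)%N.
  apply/negP => pb.
  have pa2 : (p %| a ^ 2)%N.
    by rewrite -(dvdn_addl _ (_ : p %| D * b ^ 2)%N) ?Heq // dvdn_mull // Euclid_dvdX ?pb.
  have pa : (p %| a)%N by move: pa2; rewrite Euclid_dvdX // andbT.
  have : (p %| gcdn (gcdn a b) c)%N by rewrite !dvdn_gcd pa pb pc.
  by rewrite Hg dvdn1 => /eqP p1; rewrite p1 in pp.
have pD : ~~ (p %| D)%N.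
  apply/negP => pD.
  have pa2 : (p %| a ^ 2)%N.
    by rewrite -(dvdn_addl _ (_ : p %| D * b ^ 2)%N) ?Heq // dvdn_mulr.
  have pa : (p %| a)%N by move: pa2; rewrite Euclid_dvdX // andbT.
  have h : (p ^ 2 %| D * b ^ 2)%N.
    have -> : (D * b ^ 2 = c ^ 2 - a ^ 2)%N by rewrite -Heq addKn.
    by rewrite dvdn_sub // dvdn_exp2r.
  have cpb : coprime (p ^ 2) (b ^ 2) by rewrite coprimeXl // coprimeXr // prime_coprime.
  rewrite Gauss_dvdl // in h.
  by move: (sqD p pp); rewrite h.
split; first by rewrite dvdzE abszN.
have cbp : coprimez b%:Z p%:Z by rewrite coprimezE /= coprime_sym prime_coprime.
move/coprimezP: cbp => [[u v] /= Huv].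
have HeqZ : (a%:Z) ^+ 2 + D%:Z * b%:Z ^+ 2 = c%:Z ^+ 2.
  by rewrite !expr2 -!PoszM -PoszD !mulnn Heq.
move/dvdnP: pc => [k Hk].
exists (a%:Z * u); apply/dvdzP.
exists (u ^+ 2 * (k%:Z ^+ 2 * p%:Z) + D%:Z * v * (1 + u * b%:Z)).
transitivity (u ^+ 2 * (a%:Z ^+ 2 + D%:Z * b%:Z ^+ 2) + D%:Z * (1 - u * b%:Z) * (1 + u * b%:Z)).
  by ring.
have -> : 1 - u * b%:Z = v * p%:Z by apply/eqP; rewrite subr_eq addrC Huv.
rewrite HeqZ Hk PoszM; ring.
Qed.

Lemma sl2_refl (x y z : int) : sl2_equiv (x, y, z) (x, y, z).
Proof.
exists 1, 0, 0, 1; rewrite /fa /fb /fc /=.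
split; first ring. split; first ring. split; ring.
Qed.

Lemma dc_sq (a B C : int) : 0 < a ->
  dirichlet_comp (a, B, a * C) (a, B, a * C) (a * a, B, C).
Proof.
move=> a0; exists a, a, B, C; do 2 (split; first done).
by split; [|split]; apply: sl2_refl.
Qed.

Lemma bwd (D c : nat) : (0 < D)%N ->
  (exists n : nat, class_group_iso_Z2n (- (4 * D)%:Z)%R n) ->
  odd c -> (0 < c)%N ->
  (forall p : nat, prime p -> (p %| c)%N -> legendre_eq1 (- D%:Z)%R p) ->
  exists a b : nat, normalized_solution D a b c.
Proof.
move=> D0 [n [phi [Hequiv [_ Hcomp]]]] oc c0 Hleg.
have Hp : forall p, prime p -> (p %| c)%N ->
     [/\ odd p, ~~ (p%:Z %| D%:Z)%Z & exists x, (p%:Z %| x ^+ 2 + D%:Z)%Z].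
  move=> p pp pc; have [nD [x Hx]] := Hleg p pp pc.
  split.
  - case op: (odd p) => //.
    have : (2 %| p)%N by rewrite dvdn2 op.
    by move/dvdn_trans/(_ pc); rewrite dvdn2 oc.
  - by move: nD; rewrite !dvdzE abszN.
  - by exists x; rewrite opprK in Hx.
have [t Ht] : exists t, ((c * c)%N%:Z %| t ^+ 2 + D%:Z)%Z.
  apply: exists_sqrt; first by rewrite muln_gt0 c0.
  move=> p pp; rewrite Euclid_dvdM // orbb; exact: Hp.
set cz := c%:Z.
have cct : (cz * cz %| t ^+ 2 + D%:Z)%Z by [].
have cpt : coprimez cz (2 * t).
  rewrite coprimezMr; apply/andP; split.
    by rewrite coprimezE /= coprime_sym prime_coprime // dvdn2 oc.
  rewrite coprimezE /coprime; set g := gcdn _ _.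
  have [//|g1] := eqVneq g 1%N.
  have g0 : (0 < g)%N by rewrite gcdn_gt0 c0.
  have g2 : (1 < g)%N by case: g g0 g1 => [|[|]].
  have pq := pdiv_prime g2; set q := pdiv g in pq.
  have qg : (q %| g)%N := pdiv_dvd g.
  have qc : (q %| c)%N := dvdn_trans qg (dvdn_gcdl _ _).
  have qt : (q %| `|t|)%N := dvdn_trans qg (dvdn_gcdr _ _).
  have [_ nD _] := Hp q pq qc.
  have qcc : (q%:Z %| cz * cz)%Z by rewrite dvdzE abszM dvdn_mulr.
  have := coprime_p_t _ _ _ _ pq nD qcc cct.
  by rewrite coprimezE /= prime_coprime // qt.
have cpt2 : coprimez (cz * cz) (2 * t) by rewrite coprimezMl cpt.
move/dvdzP: cct => [C HC].
pose f : bqf := (cz, 2 * t, cz * C).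
pose h : bqf := (cz * cz, 2 * t, C).
pose I : bqf := (1, 0, D%:Z).
have cz0 : 0 < cz by rewrite ltz_nat.
have dneg : - (4 * D)%:Z < 0 by rewrite oppr_lt0 ltz_nat muln_gt0 D0.
have fd : form_of_disc (- (4 * D)%:Z) f.
  have dd : disc f = - (4 * D)%:Z.
    rewrite /disc /fa /fb /fc /= PoszM.
    transitivity (4 * t ^+ 2 - 4 * (C * (cz * cz))); first by ring.
    rewrite -HC; ring.
  rewrite /form_of_disc /posdef dd dneg eqxx /primitive_form /fa /fb /fc /=.
  by rewrite (eqP cpt) andbT cz0 /gcdz /= gcd1n.
have hd : form_of_disc (- (4 * D)%:Z) h.
  have dd : disc h = - (4 * D)%:Z.
    rewrite /disc /fa /fb /fc /= PoszM.
    transitivity (4 * t ^+ 2 - 4 * (C * (cz * cz))); first by ring.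
    rewrite -HC; ring.
  rewrite /form_of_disc /posdef dd dneg eqxx /primitive_form /fa /fb /fc /=.
  by rewrite (eqP cpt2) andbT mulr_gt0 // /gcdz /= gcd1n.
have Id : form_of_disc (- (4 * D)%:Z) I.
  have dd : disc I = - (4 * D)%:Z.
    by rewrite /disc /fa /fb /fc /= PoszM; ring.
  rewrite /form_of_disc /posdef dd dneg eqxx /primitive_form /fa /fb /fc /=.
  by rewrite andbT /gcdz /= gcdn0 gcd1n.
have phiI : phi I = [ffun => false].
  rewrite (Hcomp I I I Id Id Id); last first.
    by have := dc_sq 1 0 D%:Z ltr01; rewrite !mul1r.
  by apply/ffunP => i; rewrite !ffunE; case: (phi I i).
have phih : phi h = [ffun => false].
  rewrite (Hcomp f f h fd fd hd); last first.
    exact: dc_sq.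
  by apply/ffunP => i; rewrite !ffunE; case: (phi f i).
have [p [q [r [s [Hdet [Ha _]]]]]] : sl2_equiv I h.
  by apply/(Hequiv I h Id hd); rewrite phiI phih.
move: Ha; rewrite /fa /fb /fc /= => Ha.
have sqa : forall x : int, ((`|x| * `|x|)%N)%:Z = x * x.
  by move=> x; rewrite PoszM abszE -normrM -expr2 ger0_norm ?sqr_ge0 // expr2.
exists `|p|%N, `|r|%N; split.
  apply/eqP; rewrite -eqz_nat -!mulnn PoszD sqa PoszM sqa PoszM -/cz Ha.
  by apply/eqP; ring.
have cpr : coprimez p r.
  by apply/coprimezP; exists (s, - q); rewrite /= -Hdet; ring.
by move: cpr; rewrite coprimezE /coprime => /eqP ->; rewrite gcd1n.
Qed.

Theorem lemma3p3 (D : nat) (c : nat) :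
  (0 < D)%N -> squarefree D ->
  (D %% 4 = 1 \/ D %% 4 = 2)%N ->
  (exists n : nat, class_group_iso_Z2n (- (4 * D)%:Z)%R n) ->
  odd c -> (0 < c)%N ->
  (exists a b : nat, normalized_solution D a b c) <->
  (forall p : nat, prime p -> (p %| c)%N -> legendre_eq1 (- D%:Z)%R p).
Proof.
move=> D0 sqD _ Hcg oc c0; split.
  by move=> [a [b Hs]] p pp pc; exact: (fwd D c a b p sqD Hs pp pc).
exact: bwd.
Qed.
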